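(* For every $n\ge 2$, every symmetric pseudo-Boolean function of $n$ variables has a quadratization using at most $n-2$ auxiliary variables.
   Context: A pseudo-Boolean function is a map $f:\{0,1\}^n\to\mathbb{R}$; it is symmetric if its value depends only on the Hamming weight $\sum_j x_j$. A quadratization of $f$ using $m$ auxiliary variables is a polynomial $g(x,y)$ of degree at most $2$ in the variables $x_1,\ldots,x_n,y_1,\ldots,y_m$ such that $f(x)=\min\{g(x,y):y\in\{0,1\}^m\}$ for all $x\in\{0,1\}^n$. *)

(* Defs.v *)
From HB Require Import structures.
From mathcomp Require Import all_boot all_order all_algebra.
Set Implicit Arguments. Unset Strict Implicit. Unset Printing Implicit Defensive.
Import Order.TTheory GRing.Theory Num.Theory.
Local Open Scope ring_scope.

Definition weight (n : nat) (x : 'I_n -> bool) : nat := (\sum_(i < n) x i)%N.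

Definition symmetric_pbf (R : realFieldType) (n : nat) (f : ('I_n -> bool) -> R) :=
  forall x x' : 'I_n -> bool, weight x = weight x' -> f x = f x'.

Definition quad_eval (R : realFieldType) (N : nat) (c : R) (a : 'I_N -> R)
  (Q : 'I_N -> 'I_N -> R) (z : 'I_N -> bool) : R :=
  c + \sum_(i < N) a i * (z i)%:R
    + \sum_(i < N) \sum_(j < N) Q i j * (z i)%:R * (z j)%:R.

Definition concat (n m : nat) (x : 'I_n -> bool) (y : 'I_m -> bool) : 'I_(n + m) -> bool :=
  fun i => match split i with inl j => x j | inr k => y k end.

(* g(x,y) (given by c, a, Q) is a quadratization of f with m auxiliary variables:
   f(x) = min_{y in {0,1}^m} g(x,y) for all x. *)
Definition is_quadratization (R : realFieldType) (n m : nat) (f : ('I_n -> bool) -> R)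
  (c : R) (a : 'I_(n + m) -> R) (Q : 'I_(n + m) -> 'I_(n + m) -> R) : Prop :=
  forall x : 'I_n -> bool,
    (exists y : 'I_m -> bool, f x = quad_eval c a Q (concat x y)) /\
    (forall y : 'I_m -> bool, f x <= quad_eval c a Q (concat x y)).

(* Main.v *)
Require Import Defs.
From HB Require Import structures.
From mathcomp Require Import all_boot all_order all_algebra.
From mathcomp Require Import ring lra zify.
Import Order.TTheory GRing.Theory Num.Theory.
Local Open Scope ring_scope.
Set Implicit Arguments. Unset Strict Implicit.

Lemma split_l m n (i : 'I_m) : split (lshift n i) = inl i.
Proof. exact: (unsplitK (inl i)). Qed.
Lemma split_r m n (i : 'I_n) : split (rshift m i) = inr i.
Proof. exact: (unsplitK (inr i)). Qed.

Section E.
Variable R : realFieldType.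

Definition mkA n m (B : R) (lam tt : 'I_m -> R) : 'I_(n+m) -> R :=
  fun i => match split i with inl _ => B | inr j => lam j * tt j end.
Definition mkQ n m (C : R) (lam : 'I_m -> R) : 'I_(n+m) -> 'I_(n+m) -> R :=
  fun i i' => match split i, split i' with
   | inl _, inl _ => C | inr j, inl _ => - lam j | _, _ => 0 end.

Lemma eval_concat n m (c B C : R) (lam tt : 'I_m -> R) x y :
  quad_eval c (@mkA n m B lam tt) (@mkQ n m C lam) (concat x y) =
  c + B * (weight x)%:R + C * (weight x)%:R ^+ 2 +
  \sum_(j < m) lam j * (y j)%:R * (tt j - (weight x)%:R).
Proof.
rewrite /quad_eval /weight natr_sum !big_split_ord /=.
rewrite /mkA /mkQ /concat.
rewrite [X in _ + (X + _) + _](eq_bigr (fun i => B * (x i)%:R)); last by move=> i _; rewrite split_l.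
rewrite [X in _ + (_ + X) + _](eq_bigr (fun i => lam i * tt i * (y i)%:R)); last by move=> i _; rewrite split_r.
rewrite [X in _ + _ + (X + _)](eq_bigr (fun i => \sum_(j < n) C * (x i)%:R * (x j)%:R)); last first.
  move=> i _; rewrite big_split_ord /= [X in _ + X = _]big1 ?addr0; last first.
    by move=> j _; rewrite split_l split_r mul0r mul0r.
  by apply: eq_bigr => j _; rewrite !split_l.
rewrite [X in _ + _ + (_ + X)](eq_bigr (fun i => \sum_(j < n) - lam i * (y i)%:R * (x j)%:R)); last first.
  move=> i _; rewrite big_split_ord /= [X in _ + X = _]big1 ?addr0; last first.
    by move=> j _; rewrite split_r split_r mul0r mul0r.
  by apply: eq_bigr => j _; rewrite split_l split_r.
set K := \sum_(i < n) (x i)%:R.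
have E1 : \sum_(i < n) B * (x i)%:R = B * K by rewrite mulr_sumr.
have E2 : \sum_(i < n) \sum_(j < n) C * (x i)%:R * (x j)%:R = C * K ^+ 2.
  rewrite expr2 mulr_suml mulr_sumr; apply: eq_bigr => i _.
  by rewrite /K !mulr_sumr; apply: eq_bigr => j _; rewrite mulrA.
have E3 : \sum_(i < m) \sum_(j < n) - lam i * (y i)%:R * (x j)%:R =
   \sum_(i < m) - lam i * (y i)%:R * K.
  by apply: eq_bigr => i _; rewrite /K mulr_sumr.
rewrite E1 E2 E3.
have E4 : \sum_(j < m) lam j * (y j)%:R * (tt j - K) =
  \sum_(i < m) lam i * tt i * (y i)%:R + \sum_(i < m) - lam i * (y i)%:R * K.
  rewrite -big_split /=; apply: eq_bigr => i _; ring.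
rewrite E4; ring.
Qed.

Lemma taylor (g : nat -> R) (N : nat) (k : nat) : (k <= N.+1)%N ->
  g k = g 0%N + k%:R * (g 1%N - g 0%N) +
     \sum_(i < N) (g i.+2 - 2 * g i.+1 + g i) * (k - i.+1)%:R.
Proof.
pose P k := g k = g 0%N + k%:R * (g 1%N - g 0%N) +
     \sum_(i < N) (g i.+2 - 2 * g i.+1 + g i) * (k - i.+1)%:R.
suff H : forall k, (k.+1 <= N.+1)%N -> P k /\ P k.+1.
  case: k => [|k] Hk.
    by case: (H 0%N isT).
  by case: (H k Hk).
clear k; elim=> [|k IH] Hk.
  split; rewrite /P big1 ?addr0.
  - by rewrite mul0r addr0.
  - by move=> i _; rewrite sub0n mulr0.
  - by rewrite mul1r addrC subrK.
  - by move=> i _; rewrite subSS sub0n mulr0.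
have [P0 P1] := IH (ltnW Hk).
split => //.
rewrite /P.
have Hkn : (k < N)%N by [].
have E : forall i : 'I_N, (k.+2 - i.+1)%:R = 2 * (k.+1 - i.+1)%:R - (k - i.+1)%:R
     + (i == k :> nat)%:R :> R.
  move=> i; apply/eqP; rewrite -subr_eq0; apply/eqP.
  have : ((k.+2 - i.+1) + (k - i.+1) = 2 * (k.+1 - i.+1) + (i == k :> nat))%N.
    by case: (ltngtP i k) => H; lia.
  move/(congr1 (fun z : nat => z%:R : R)); rewrite !natrD addr0 => H; lra.
have S : \sum_(i < N) (g i.+2 - 2 * g i.+1 + g i) * (i == k :> nat)%:R =
   g k.+2 - 2 * g k.+1 + g k.
  rewrite (bigD1 (Ordinal Hkn)) //= eqxx mulr1 big1 ?addr0 // => i /negP Hi.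
  case: eqP => [Hik|]; last by rewrite mulr0.
  by exfalso; apply: Hi; apply/eqP/val_inj.
have S2 : \sum_(i < N) (g i.+2 - 2 * g i.+1 + g i) *
     (2 * (k.+1 - i.+1)%:R - (k - i.+1)%:R + (i == k :> nat)%:R) =
  2 * \sum_(i < N) (g i.+2 - 2 * g i.+1 + g i) * (k.+1 - i.+1)%:R
  - \sum_(i < N) (g i.+2 - 2 * g i.+1 + g i) * (k - i.+1)%:R
  + \sum_(i < N) (g i.+2 - 2 * g i.+1 + g i) * (i == k :> nat)%:R.
  rewrite mulr_sumr -sumrB -big_split /=; apply: eq_bigr => i _; ring.
have S3 : \sum_(i < N) (g i.+2 - 2 * g i.+1 + g i) * (k.+2 - i.+1)%:R =
  \sum_(i < N) (g i.+2 - 2 * g i.+1 + g i) *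
     (2 * (k.+1 - i.+1)%:R - (k - i.+1)%:R + (i == k :> nat)%:R).
  by apply: eq_bigr => i _; rewrite E.
have e2 : (k.+2)%:R = k%:R + 2 :> R by rewrite -addn2 natrD.
have e1 : (k.+1)%:R = k%:R + 1 :> R by rewrite -addn1 natrD.
rewrite S3 S2 S e2.
have H1 : \sum_(i < N) (g i.+2 - 2 * g i.+1 + g i) * (k.+1 - i.+1)%:R =
   g k.+1 - g 0%N - (k%:R + 1) * (g 1%N - g 0%N).
  by rewrite {1}P1 e1; ring.
have H0 : \sum_(i < N) (g i.+2 - 2 * g i.+1 + g i) * (k - i.+1)%:R =
   g k - g 0%N - k%:R * (g 1%N - g 0%N).
  by rewrite {1}P0; ring.
rewrite H1 H0; ring.
Qed.

Lemma term_le (l : R) (b : bool) (t k : nat) : 0 <= l ->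
  - l * (k - t)%:R <= l * b%:R * (t%:R - k%:R).
Proof.
move=> hl; case: (leqP t k) => htk.
  rewrite natrB //; case: b => /=.
    by rewrite mulr1 le_eqVlt; apply/orP; left; apply/eqP; ring.
  rewrite mulr0 mul0r mulNr oppr_le0; apply: mulr_ge0 => //.
  by rewrite subr_ge0 ler_nat.
have -> : (k - t = 0)%N by apply/eqP; rewrite subn_eq0 ltnW.
rewrite mulr0; case: b => /=; last by rewrite mulr0 mul0r.
rewrite mulr1; apply: mulr_ge0 => //.
by rewrite subr_ge0 ler_nat ltnW.
Qed.

Lemma term_eq (l : R) (t k : nat) :
  - l * (k - t)%:R = l * (t < k)%N%:R * (t%:R - k%:R).
Proof.
case: (leqP k t) => htk /=.
  have -> : (k - t = 0)%N by apply/eqP; rewrite subn_eq0.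
  by rewrite mulr0 mulr0 mul0r.
rewrite natrB; last exact: ltnW.
by rewrite mulr1 mulNr mulrBr mulrBr opprB.
Qed.

Lemma weight_pref N k : (k <= N)%N -> weight (fun i : 'I_N => (i < k)%N) = k.
Proof.
move=> hk; rewrite /weight -(big_mkord xpredT (fun i => nat_of_bool (i < k)%N)).
rewrite (@big_cat_nat _ _ _ k 0 N xpredT _ (leq0n k) hk) /=.
rewrite (eq_big_nat _ _ (F2 := fun _ => 1%N)); last first.
  by move=> i /andP [_ ->].
rewrite [X in (_ + X)%N](eq_big_nat _ _ (F2 := fun _ => 0%N)); last first.
  by move=> i /andP [hi _]; rewrite ltnNge hi.
by rewrite !sum_nat_const_nat muln1 muln0 addn0 subn0.
Qed.

Lemma weight_le N (x : 'I_N -> bool) : (weight x <= N)%N.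
Proof.
rewrite /weight -[X in (_ <= X)%N]card_ord -sum1_card.
by apply: leq_sum => i _; exact: leq_b1.
Qed.

End E.

Unset Implicit Arguments.

Theorem theorem3 (R : realFieldType) (n : nat) (hn : (2 <= n)%N)
  (f : ('I_n -> bool) -> R) (hf : symmetric_pbf f) :
  exists m : nat, (m <= n - 2)%N /\
    exists (c : R) (a : 'I_(n + m) -> R) (Q : 'I_(n + m) -> 'I_(n + m) -> R),
      is_quadratization f c a Q.
Proof.
move: n hn f hf; case=> [|[|n']] // _ f hf.
exists n'; split; first by lia.
pose h (k : nat) := f (fun i : 'I_n'.+2 => (i < k)%N).
pose D (i : nat) := h i.+2 - 2 * h i.+1 + h i.
have [p Hp] : exists p : 'I_n'.+1, forall i : 'I_n'.+1, D i <= D p.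
  case: (@Order.TotalTheory.arg_maxP _ R 'I_n'.+1 ord0 xpredT (fun i => D i) isT).
  by move=> p _ Hp; exists p => i; exact: Hp.
pose C := D p / 2.
pose g k := h k - C * k%:R ^+ 2.
pose lam (j : 'I_n') := D p - D (lift p j).
pose tt (j : 'I_n') : R := ((lift p j).+1)%:R.
exists (g 0%N), (@mkA R n'.+2 n' (g 1%N - g 0%N) lam tt), (@mkQ R n'.+2 n' C lam).
move=> x.
have hx : f x = h (weight x).
  by apply: hf; rewrite weight_pref // weight_le.
have Dg : forall i, g i.+2 - 2 * g i.+1 + g i = D i - D p.
  move=> i; rewrite /g /C /D -[i.+2]addn2 -[i.+1]addn1 !natrD; field; rewrite ?pnatr_eq0 //.
have hg : h (weight x) = g 0%N + (weight x)%:R * (g 1%N - g 0%N) + C * (weight x)%:R ^+ 2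
   + \sum_(j < n') (- lam j) * (weight x - (lift p j).+1)%:R.
  have -> : h (weight x) = g (weight x) + C * (weight x)%:R ^+ 2 by rewrite /g subrK.
  rewrite (taylor g (weight_le x)).
  rewrite (eq_bigr (fun i : 'I_n'.+1 => (D i - D p) * (weight x - i.+1)%:R)); last by move=> i _; rewrite Dg.
  rewrite (bigD1_ord p) //= subrr mul0r add0r.
  have -> : \sum_(j < n') (D (lift p j) - D p) * (weight x - (lift p j).+1)%:R =
    \sum_(j < n') (- lam j) * (weight x - (lift p j).+1)%:R.
    by apply: eq_bigr => j _; rewrite /lam opprB.
  ring.
have lam0 : forall j, 0 <= lam j by move=> j; rewrite /lam subr_ge0.
split.
  exists (fun j => ((lift p j).+1 < weight x)%N).
  rewrite eval_concat hx hg.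
  have -> : \sum_(j < n') (- lam j) * (weight x - (lift p j).+1)%:R =
     \sum_(j < n') lam j * ((lift p j).+1 < weight x)%N%:R * (tt j - (weight x)%:R).
    by apply: eq_bigr => j _; rewrite term_eq.
  ring.
move=> y; rewrite eval_concat hx hg.
have : \sum_(j < n') (- lam j) * (weight x - (lift p j).+1)%:R <=
     \sum_(j < n') lam j * (y j)%:R * (tt j - (weight x)%:R).
  by apply: ler_sum => j _; apply: term_le.
lra.
Qed.
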